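(* Let $d,J,n\ge1$, let $y_1,\dots,y_n\in\mathbb{R}^d$, and let $\{\theta^k\}_{k\in\mathbb N}$ be the sequence generated by the CEMM algorithm (described in the context) from an initial point $\theta^0\in\Theta$. Then the sequence $\{\Lambda(\theta^k\mid\mathbf y)\}_{k\in\mathbb N}$ is monotone non-decreasing and satisfies, for every $k$, $$\Lambda(\theta^{k+1}\mid\mathbf y)-\Lambda(\theta^k\mid\mathbf y)\ \ge\ D(\theta^{k+1},\theta^k\mid\mathbf y).$$
   Context: $\varphi(y\mid\mu,\Sigma)$ is the Gaussian density on $\mathbb R^d$ with mean $\mu$ and covariance $\Sigma$. $\Theta$ is the set of $\theta=(p_1,\dots,p_J,\mu_1,\dots,\mu_J,\Sigma_1,\dots,\Sigma_J)$ with $p_j\in(0,1)$, $\mu_j\in\mathbb R^d$, $\Sigma_j$ symmetric positive definite (proportions not required to sum to 1); write $\theta_j=(p_j,\mu_j,\Sigma_j)$. The observed log-likelihood is $L(\theta\mid\mathbf y)=\sum_{i=1}^n\log\sum_{j=1}^J p_j\varphi(y_i\mid\mu_j,\Sigma_j)$ and the modified log-likelihood is $\Lambda(\theta\mid\mathbf y)=L(\theta\mid\mathbf y)-n\big(\sum_{\ell=1}^J p_\ell-1\big)$. Let $t_{ij}(\theta)=p_j\varphi(y_i\mid\mu_j,\Sigma_j)/\sum_{\ell=1}^J p_\ell\varphi(y_i\mid\mu_\ell,\Sigma_\ell)$ and $D(\theta,\theta'\mid\mathbf y)=\sum_{i=1}^n\sum_{j=1}^J t_{ij}(\theta')\log\big(t_{ij}(\theta')/t_{ij}(\theta)\big)$.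 CEMM algorithm: given $\theta^k$, let $j=k-\lfloor k/J\rfloor J+1$ (so components are visited cyclically). Compute $t_{ij}(\theta^k)$ for $i=1,\dots,n$, set $p_j^{k+1}=\frac1n\sum_i t_{ij}(\theta^k)$, $\mu_j^{k+1}=\sum_i t_{ij}(\theta^k)y_i/\sum_i t_{ij}(\theta^k)$, $\Sigma_j^{k+1}=\sum_i t_{ij}(\theta^k)(y_i-\mu_j^{k+1})(y_i-\mu_j^{k+1})^{T}/\sum_i t_{ij}(\theta^k)$, and $\theta_\ell^{k+1}=\theta_\ell^k$ for $\ell\ne j$. (The updated proportions need not sum to $1$.) *)

(* Defs.v *)
From HB Require Import structures.
From mathcomp Require Import all_boot all_order all_algebra.
From mathcomp Require Import all_classical all_reals all_analysis.
Set Implicit Arguments. Unset Strict Implicit. Unset Printing Implicit Defensive.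
Import Order.TTheory GRing.Theory Num.Theory.
Local Open Scope ring_scope.

Section GMM.
Variables (R : realType) (d J : nat).

Definition spd (S : 'M[R]_d) : Prop :=
  S^T = S /\ forall v : 'cV[R]_d, v != 0 -> 0 < (v^T *m S *m v) ord0 ord0.

Definition gauss (y mu : 'cV[R]_d) (S : 'M[R]_d) : R :=
  (Num.sqrt ((2 * pi) ^+ d * \det S))^-1 *
  expR (- (((y - mu)^T *m invmx S *m (y - mu)) ord0 ord0) / 2).

(* parameter theta = (p_j, mu_j, Sigma_j)_{j < J}; proportions need not sum to 1 *)
Record param := Param {
  prop : 'I_J -> R;
  mean : 'I_J -> 'cV[R]_d;
  cov  : 'I_J -> 'M[R]_d }.

Definition in_Theta (th : param) : Prop :=
  forall j, 0 < prop th j < 1 /\ spd (cov th j).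

Variable n : nat.
Variable y : 'I_n -> 'cV[R]_d.

Definition mixdens (th : param) (i : 'I_n) : R :=
  \sum_(l < J) prop th l * gauss (y i) (mean th l) (cov th l).

Definition loglik (th : param) : R := \sum_(i < n) ln (mixdens th i).

Definition modloglik (th : param) : R :=
  loglik th - n%:R * (\sum_(l < J) prop th l - 1).

Definition tpost (th : param) (i : 'I_n) (j : 'I_J) : R :=
  prop th j * gauss (y i) (mean th j) (cov th j) / mixdens th i.

Definition Dkl (th th' : param) : R :=
  \sum_(i < n) \sum_(j < J) tpost th' i j * ln (tpost th' i j / tpost th i j).

Definition cemm_step (th : param) (j : 'I_J) : param :=
  let s := \sum_(i < n) tpost th i j in
  let mu' := s^-1 *: \sum_(i < n) (tpost th i j *: y i) in
  let Sg' := s^-1 *: \sum_(i < n)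
               (tpost th i j *: ((y i - mu') *m (y i - mu')^T)) in
  Param (fun l => if l == j then s / n%:R else prop th l)
        (fun l => if l == j then mu' else mean th l)
        (fun l => if l == j then Sg' else cov th l).

End GMM.

(* Main.v *)
Require Import Defs.
From HB Require Import structures.
From mathcomp Require Import all_boot all_order all_algebra.
From mathcomp Require Import all_classical all_reals all_analysis.
Import Order.TTheory GRing.Theory Num.Theory.
Local Open Scope ring_scope.
From mathcomp Require Import ring lra.
Set Implicit Arguments. Unset Strict Implicit. Unset Printing Implicit Defensive.
Section Mat.
Variable R : realType.

Lemma ln_le_sub1 (x : R) : 0 < x -> ln x <= x - 1.
Proof.
move=> x0; have := @le_ln1Dx R (x - 1).
rewrite [1 + _]addrC subrK; apply; lra.
Qed.

Lemma spd_a n (P : 'M[R]_(1 + n)) : spd P -> 0 < ulsubmx P 0 0.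
Proof.
move=> [_ hP].
have := hP (col_mx 1%:M 0).
rewrite -[P in _ *m P *m _]submxK tr_col_mx mul_row_block mul_row_col.
rewrite trmx1 trmx0 !mul1mx !mul0mx !mulmx0 !addr0 mulmx1; apply.
by rewrite col_mx_eq0 negb_and oner_eq0.
Qed.


Definition schurc n (P : 'M[R]_(1 + n)) : 'M[R]_n :=
  drsubmx P - (ulsubmx P 0 0)^-1 *: (dlsubmx P *m (dlsubmx P)^T).

Lemma spd_ur n (P : 'M[R]_(1 + n)) : spd P -> ursubmx P = (dlsubmx P)^T.
Proof. by move=> [hs _]; rewrite trmx_dlsub hs. Qed.

Lemma spd_ul n (P : 'M[R]_(1 + n)) : ulsubmx P = (ulsubmx P 0 0)%:M.
Proof. exact: mx11_scalar. Qed.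

Lemma spd_schur n (P : 'M[R]_(1 + n)) : spd P -> spd (schurc P).
Proof.
move=> hP; have a0 := spd_a hP; have hur := spd_ur hP.
have [hs hq] := hP.
split.
  rewrite /schurc linearB /= linearZ /= trmx_mul trmxK trmx_drsub hs //.
move=> v v0.
set a := ulsubmx P 0 0; set b := dlsubmx P.
set c := - (a^-1 *: (b^T *m v)).
have := hq (col_mx c v).
rewrite -[P in _ *m P *m _]submxK tr_col_mx mul_row_block mul_row_col.
rewrite hur (spd_ul P) -/a -/b.
have hcT : c^T = - (a^-1 *: (v^T *m b)).
  by rewrite /c linearN /= linearZ /= trmx_mul trmxK.
rewrite mul_mx_scalar hcT scalerN scalerA mulfV ?gt_eqF // scale1r addNr mul0mx add0r.
have -> : (- (a^-1 *: (v^T *m b)) *m b^T + v^T *m drsubmx P) *m v = v^T *m schurc P *m v.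
  rewrite /schurc mulmxDl mulmxBr mulmxBl mulNmx -!scalemxAl -!scalemxAr !mulmxA.
  by rewrite addrC mulNmx -scalemxAl.
apply; by rewrite col_mx_eq0 negb_and v0 orbT.
Qed.

Definition cholP n (P : 'M[R]_n) := exists L : 'M[R]_n,
  P = L *m L^T /\ 0 < \det L /\ 2 * ln (\det L) <= \tr P - n%:R.

Lemma tr_bbT n (b : 'cV[R]_n) : 0 <= \tr (b *m b^T).
Proof.
rewrite mxtrace_mulC trace_mx11 mxE; apply: sumr_ge0 => k _.
by rewrite mxE -expr2 sqr_ge0.
Qed.

Lemma chol_step n (IH : forall Q : 'M[R]_n, spd Q -> cholP Q)
  (P : 'M[R]_(1 + n)) : spd P -> cholP P.
Proof.
move=> hP; have a0 := spd_a hP; have hur := spd_ur hP.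
have [L' [hL' [dL' lL']]] := IH _ (spd_schur hP).
set a := ulsubmx P 0 0 in a0 hL' lL'; set b := dlsubmx P in hur hL' lL'.
set r := Num.sqrt a.
have r0 : 0 < r by rewrite sqrtr_gt0.
have rr : r * r = a by rewrite -expr2 sqr_sqrtr // ltW.
exists (block_mx r%:M 0 (r^-1 *: b) L').
split.
  rewrite tr_block_mx mulmx_block -{1}[P]submxK hur (spd_ul P) -/a -/b.
  congr block_mx.
  - by rewrite tr_scalar_mx -scalar_mxM rr trmx0 mul0mx addr0.
  - by rewrite mul0mx addr0 mul_scalar_mx linearZ /= scalerA mulfV ?gt_eqF // scale1r.
  - by rewrite trmx0 mulmx0 addr0 tr_scalar_mx mul_mx_scalar scalerA mulfV ?gt_eqF // scale1r.
  - rewrite -hL' /schurc -/a -/b linearZ /= -scalemxAl -scalemxAr scalerA -invfM rr.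
    by rewrite addrC subrK.
split; first by rewrite det_lblock det_scalar1 mulr_gt0.
rewrite det_lblock det_scalar1 lnM ?posrE //.
have lr : ln r + ln r = ln a by rewrite -lnM ?posrE // rr.
have la := ln_le_sub1 a0.
have trP : \tr P = a + \tr (drsubmx P).
  by rewrite -{1}[P]submxK mxtrace_block (spd_ul P) mxtrace_scalar.
have trQ : \tr (drsubmx P) = \tr (schurc P) + a^-1 * \tr (b *m b^T).
  by rewrite /schurc raddfB /= mxtraceZ -/a -/b subrK.
have tb : 0 <= a^-1 * \tr (b *m b^T).
  by apply: mulr_ge0; [rewrite invr_ge0 ltW | apply: tr_bbT].
rewrite trP trQ natrD; lra.
Qed.

Lemma chol n (P : 'M[R]_n) : spd P -> cholP P.
Proof.
elim: n P => [|n IH] P hP.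
  exists 1%:M; split; first by rewrite [P]flatmx0 [_ *m _]flatmx0.
  by rewrite det1 ln1 /mxtrace big_ord0 subrr mulr0.
exact: (chol_step IH).
Qed.


Lemma spd_det_gt0 n (S : 'M[R]_n) : spd S -> 0 < \det S.
Proof.
move=> /chol [L [-> [dL _]]].
by rewrite det_mulmx det_tr mulr_gt0.
Qed.

Lemma spd_unit n (S : 'M[R]_n) : spd S -> S \in unitmx.
Proof. by move=> /spd_det_gt0 h; rewrite unitmxE unitfE gt_eqF. Qed.

Lemma ML n (S A : 'M[R]_n) : spd S -> spd A ->
  ln (\det A) - ln (\det S) <= \tr (invmx S *m A) - n%:R.
Proof.
move=> hS hA; have [L [hL [dL _]]] := chol hS.
have uL : L \in unitmx by rewrite unitmxE unitfE gt_eqF.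
set N := invmx L.
have uNT : N^T \in unitmx by rewrite unitmx_tr unitmx_inv.
set M := N *m A *m N^T.
have hM : spd M.
  have [hsA hqA] := hA.
  split; first by rewrite /M !trmx_mul trmxK hsA mulmxA.
  move=> v v0.
  have -> : v^T *m M *m v = (N^T *m v)^T *m A *m (N^T *m v).
    by rewrite /M !trmx_mul trmxK !mulmxA.
  apply: hqA; apply: contra v0 => /eqP h.
  by rewrite -(mulKmx uNT v) h mulmx0.
have [L2 [hL2 [dL2 lL2]]] := chol hM.
have dM : \det M = \det L2 * \det L2 by rewrite hL2 det_mulmx det_tr.
have dM' : \det A = \det M * (\det L * \det L).
  rewrite /M !det_mulmx det_tr /N det_inv.
  by field; rewrite gt_eqF.
have dS : \det S = \det L * \det L by rewrite hL det_mulmx det_tr.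
have iS : invmx S = N^T *m N.
  have uS : S \in unitmx by rewrite hL unitmx_mul uL unitmx_tr uL.
  have h1 : S *m (N^T *m N) = 1%:M.
    rewrite hL -mulmxA (mulmxA L^T) -trmx_mul mulVmx // trmx1 mul1mx mulmxV //.
  by rewrite -[RHS](mulKmx uS) h1 mulmx1.
have trE : \tr (invmx S *m A) = \tr M.
  by rewrite iS -mulmxA mxtrace_mulC /M.
have pM : 0 < \det M by rewrite dM mulr_gt0.
rewrite dM' dS trE !lnM ?posrE ?mulr_gt0 //.
move: lL2; rewrite dM lnM ?posrE // => h; lra.
Qed.


Lemma twopid_gt0 d : 0 < (2 * pi) ^+ d :> R.
Proof. by rewrite exprn_gt0 // mulr_gt0 // pi_gt0. Qed.

Lemma gauss_gt0 d (x mu : 'cV[R]_d) S : spd S -> 0 < gauss x mu S.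
Proof.
move=> /spd_det_gt0 hS; rewrite /gauss mulr_gt0 ?expR_gt0 // invr_gt0.
by rewrite sqrtr_gt0 mulr_gt0 // twopid_gt0.
Qed.

Lemma ln_gauss d (x mu : 'cV[R]_d) S : spd S ->
  ln (gauss x mu S) = - (ln ((2 * pi) ^+ d) + ln (\det S)) / 2
     - ((x - mu)^T *m invmx S *m (x - mu)) 0 0 / 2.
Proof.
move=> /spd_det_gt0 hS.
have u0 : 0 < (2 * pi) ^+ d * \det S by rewrite mulr_gt0 // twopid_gt0.
have r0 : 0 < Num.sqrt ((2 * pi) ^+ d * \det S) by rewrite sqrtr_gt0.
have hr : ln (Num.sqrt ((2 * pi) ^+ d * \det S)) * 2 = ln ((2 * pi) ^+ d) + ln (\det S).
  rewrite -lnM ?posrE ?twopid_gt0 // -[in RHS](sqr_sqrtr (ltW u0)) expr2 lnM ?posrE //.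
  by rewrite mulr_natr mulr2n.
rewrite /gauss lnM ?posrE ?invr_gt0 ?expR_gt0 // lnV ?posrE // expRK -hr.
by rewrite !mulNr mulrK ?unitfE ?pnatr_eq0.
Qed.


Lemma quad_tr d (z : 'cV[R]_d) (P : 'M[R]_d) :
  (z^T *m P *m z) 0 0 = \tr (P *m (z *m z^T)).
Proof. by rewrite -trace_mx11 -mulmxA mxtrace_mulC !mulmxA. Qed.

Definition wmean n d (w : 'I_n -> R) (y : 'I_n -> 'cV[R]_d) : 'cV[R]_d :=
  (\sum_(i < n) w i)^-1 *: \sum_(i < n) (w i *: y i).
Definition wcov n d (w : 'I_n -> R) (y : 'I_n -> 'cV[R]_d) : 'M[R]_d :=
  (\sum_(i < n) w i)^-1 *: \sum_(i < n)
     (w i *: ((y i - wmean w y) *m (y i - wmean w y)^T)).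

Lemma wcentered n d (w : 'I_n -> R) (y : 'I_n -> 'cV[R]_d) :
  \sum_(i < n) w i != 0 -> \sum_(i < n) (w i *: (y i - wmean w y)) = 0.
Proof.
move=> s0.
rewrite (eq_bigr (fun i => w i *: y i - w i *: wmean w y)); last by move=> i _; rewrite scalerBr.
by rewrite sumrB -scaler_suml /wmean scalerA mulfV // scale1r subrr.
Qed.

Lemma scatter n d (w : 'I_n -> R) (y : 'I_n -> 'cV[R]_d) (mu : 'cV[R]_d) :
  \sum_(i < n) w i != 0 ->
  \sum_(i < n) (w i *: ((y i - mu) *m (y i - mu)^T)) =
  (\sum_(i < n) w i) *: wcov w y +
  (\sum_(i < n) w i) *: ((wmean w y - mu) *m (wmean w y - mu)^T).
Proof.
move=> s0; set m := wmean w y; set e := m - mu.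
have Z := wcentered y s0; rewrite -/m in Z.
rewrite /wcov -/m scalerA mulfV // scale1r.
rewrite (eq_bigr (fun i => w i *: ((y i - m) *m (y i - m)^T) +
   ((w i *: (y i - m)) *m e^T + (e *m (w i *: (y i - m))^T + w i *: (e *m e^T))))).
  rewrite !big_split /= -mulmx_suml Z mul0mx add0r.
  rewrite -mulmx_sumr -raddf_sum /= Z trmx0 mulmx0 add0r scaler_suml //.
move=> i _.
have -> : y i - mu = (y i - m) + e by rewrite /e addrA subrK.
move: (y i - m) => z.
rewrite linearD /= mulmxDl !mulmxDr !scalerDr.
rewrite [(w i *: z)^T]linearZ /= -scalemxAl -scalemxAr.
by rewrite !addrA.
Qed.

Lemma wquad n d (w : 'I_n -> R) (y : 'I_n -> 'cV[R]_d) (mu : 'cV[R]_d) P :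
  \sum_(i < n) w i != 0 ->
  \sum_(i < n) w i * ((y i - mu)^T *m P *m (y i - mu)) 0 0 =
  (\sum_(i < n) w i) * \tr (P *m wcov w y) +
  (\sum_(i < n) w i) * ((wmean w y - mu)^T *m P *m (wmean w y - mu)) 0 0.
Proof.
move=> s0.
rewrite (eq_bigr (fun i => \tr (P *m (w i *: ((y i - mu) *m (y i - mu)^T))))); last first.
  by move=> i _; rewrite quad_tr -scalemxAr mxtraceZ.
rewrite -raddf_sum /= -mulmx_sumr scatter // mulmxDr mxtraceD -!scalemxAr !mxtraceZ.
by rewrite quad_tr.
Qed.

Lemma quad_inv_ge0 d (S : 'M[R]_d) (v : 'cV[R]_d) : spd S ->
  0 <= (v^T *m invmx S *m v) 0 0.
Proof.
move=> hS; have uS := spd_unit hS; have [hs hq] := hS.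
have [->|v0] := eqVneq v 0; first by rewrite mulmx0 mxE.
have -> : v^T *m invmx S *m v = (invmx S *m v)^T *m S *m (invmx S *m v).
  by rewrite trmx_mul trmx_inv hs -!mulmxA (mulmxA S) mulmxV // mul1mx.
apply/ltW/hq; apply: contra v0 => /eqP h.
by rewrite -(mulKVmx uS v) h mulmx0.
Qed.

Lemma sum_aff n (w : 'I_n -> R) (K : R) (q : 'I_n -> R) :
  \sum_(i < n) w i * (K - q i / 2) =
  (\sum_(i < n) w i) * K - (\sum_(i < n) w i * q i) / 2.
Proof.
rewrite (eq_bigr (fun i => w i * K - (w i * q i) / 2)); last first.
  by move=> i _; rewrite mulrBr mulrA.
by rewrite sumrB -mulr_suml -mulr_suml.
Qed.

Lemma sum_gt0 n (w : 'I_n -> R) : (0 < n)%N -> (forall i, 0 < w i) ->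
  0 < \sum_(i < n) w i.
Proof.
move=> hn hw; rewrite (bigD1 (Ordinal hn)) //=.
by rewrite ltr_wpDr ?hw // sumr_ge0 // => i _; apply/ltW.
Qed.

Lemma gauss_step n d (w : 'I_n -> R) (y : 'I_n -> 'cV[R]_d) mu S :
  (0 < n)%N -> (forall i, 0 < w i) -> spd S -> spd (wcov w y) ->
  \sum_(i < n) w i * ln (gauss (y i) mu S) <=
  \sum_(i < n) w i * ln (gauss (y i) (wmean w y) (wcov w y)).
Proof.
move=> hn hw hS hA.
have s0 := sum_gt0 hn hw.
have s0' : \sum_(i < n) w i != 0 by rewrite gt_eqF.
rewrite (eq_bigr (fun i => w i * (- (ln ((2 * pi) ^+ d) + ln (\det S)) / 2
     - ((y i - mu)^T *m invmx S *m (y i - mu)) 0 0 / 2))); last first.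
  by move=> i _; rewrite ln_gauss.
rewrite [X in _ <= X](eq_bigr (fun i => w i * (- (ln ((2 * pi) ^+ d) + ln (\det (wcov w y))) / 2
     - ((y i - wmean w y)^T *m invmx (wcov w y) *m (y i - wmean w y)) 0 0 / 2))); last first.
  by move=> i _; rewrite ln_gauss.
rewrite !sum_aff !wquad // mulVmx ?spd_unit // mxtrace1 subrr trmx0 !mul0mx [in X in _ <= X]mxE.
have hML := ML hS hA.
have hq := quad_inv_ge0 (wmean w y - mu) hS.
set s := \sum_(i < n) w i in s0 s0' hML hq *.
set LA := ln (\det (wcov w y)) in hML *.
set LS := ln (\det S) in hML *.
set T := \tr (invmx S *m wcov w y) in hML *.
set Q := ((wmean w y - mu)^T *m invmx S *m (wmean w y - mu)) 0 0 in hq *.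
have h : 0 <= s * (T + Q - d%:R - (LA - LS)) by apply: mulr_ge0; lra.
nra.
Qed.

End Mat.

Section Main.
Variables (R : realType) (d J n : nat) (y : 'I_n -> 'cV[R]_d).

Definition good (th : param R d J) := forall l, 0 < prop th l /\ spd (cov th l).

Definition fc (th : param R d J) i l := prop th l * gauss (y i) (mean th l) (cov th l).

Lemma fc_gt0 th i l : good th -> 0 < fc th i l.
Proof. by move=> /(_ l) [p0 s0]; rewrite /fc mulr_gt0 // gauss_gt0. Qed.

Lemma mix_gt0 th i : (0 < J)%N -> good th -> 0 < mixdens y th i.
Proof. by move=> hJ g; apply: sum_gt0 => // l; apply: fc_gt0. Qed.

Lemma tpost_gt0 th i l : good th -> 0 < tpost y th i l.
Proof.
move=> g; have hJ : (0 < J)%N by case: l => l /= /(leq_ltn_trans (leq0n l)).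
by rewrite /tpost divr_gt0 // ?mix_gt0 //; apply: fc_gt0.
Qed.

Lemma tpost_sum th i : (0 < J)%N -> good th -> \sum_(l < J) tpost y th i l = 1.
Proof.
move=> hJ g; rewrite /tpost -mulr_suml divff // gt_eqF //.
exact: mix_gt0.
Qed.

Lemma ln_tpost th i l : good th ->
  ln (tpost y th i l) = ln (fc th i l) - ln (mixdens y th i).
Proof.
move=> g; have hJ : (0 < J)%N by case: l => l /= /(leq_ltn_trans (leq0n l)).
by rewrite /tpost ln_div ?posrE ?mix_gt0 //; apply: fc_gt0.
Qed.

Lemma ln_fc th i l : good th ->
  ln (fc th i l) = ln (prop th l) + ln (gauss (y i) (mean th l) (cov th l)).
Proof.
by move=> /(_ l) [p0 s0]; rewrite /fc lnM // posrE // gauss_gt0.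
Qed.

Lemma decomp th th' i : (0 < J)%N -> good th -> good th' ->
  ln (mixdens y th' i) =
  \sum_(l < J) tpost y th i l * (ln (fc th' i l) - ln (tpost y th' i l)).
Proof.
move=> hJ g g'.
rewrite (eq_bigr (fun l => tpost y th i l * ln (mixdens y th' i))); last first.
  by move=> l _; rewrite ln_tpost // opprB addrC subrK.
by rewrite -mulr_suml tpost_sum // mul1r.
Qed.


Lemma Dkl_ge0 th th' : (0 < J)%N -> good th -> good th' -> 0 <= Dkl y th' th.
Proof.
move=> hJ g g'; apply: sumr_ge0 => i _.
have h0 : \sum_(l < J) (tpost y th i l - tpost y th' i l) = 0.
  by rewrite sumrB !tpost_sum // subrr.
rewrite [X in X <= _](esym h0); apply: ler_sum => l _.
have t0 := tpost_gt0 i l g; have t0' := tpost_gt0 i l g'.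
move: (tpost y th i l) (tpost y th' i l) t0 t0' => t t' t0 t0'.
have h := ln_le_sub1 (divr_gt0 t0' t0).
rewrite ln_div ?posrE // in h; rewrite ln_div ?posrE //.
have e : t * (t' / t) = t' by field; rewrite gt_eqF.
nra.
Qed.

Lemma loglik_diff th th' : (0 < J)%N -> good th -> good th' ->
  loglik y th' - loglik y th =
  \sum_(i < n) \sum_(l < J) tpost y th i l * (ln (fc th' i l) - ln (fc th i l))
  + Dkl y th' th.
Proof.
move=> hJ g g'; rewrite /loglik /Dkl -sumrB -big_split; apply: eq_bigr => i _.
rewrite (decomp i hJ g g') (decomp i hJ g g) -sumrB -big_split; apply: eq_bigr => l _.
have t0 := tpost_gt0 i l g; have t0' := tpost_gt0 i l g'.
rewrite ln_div ?posrE // /=; ring.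
Qed.


Lemma step_main th j : (0 < J)%N -> (0 < n)%N -> good th ->
  good (cemm_step y th j) ->
  Dkl y (cemm_step y th j) th <=
  modloglik y (cemm_step y th j) - modloglik y th.
Proof.
move=> hJ hn g g'; set th' := cemm_step y th j.
set w := fun i => tpost y th i j.
have pj : prop th' j = (\sum_(i < n) w i) / n%:R by rewrite /th' /cemm_step /= eqxx.
have mj : mean th' j = wmean w y by rewrite /th' /cemm_step /= eqxx.
have cj : cov th' j = wcov w y by rewrite /th' /cemm_step /= eqxx.
have ol : forall i l, l != j -> fc th' i l = fc th i l.
  by move=> i l hl; rewrite /fc /th' /cemm_step /= (negbTE hl).
have op : forall l, l != j -> prop th' l = prop th l.
  by move=> l hl; rewrite /th' /cemm_step /= (negbTE hl).
have [p0 hS] := g j; have [_ hA] := g' j.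
rewrite cj in hA.
have s0 : 0 < \sum_(i < n) w i by apply: sum_gt0 => // i; apply: tpost_gt0.
have gs := gauss_step (mean th j) hn (fun i => tpost_gt0 i j g) hS hA.
rewrite -/w -mj -cj in gs.
have X : \sum_(i < n) \sum_(l < J) tpost y th i l * (ln (fc th' i l) - ln (fc th i l))
   = (\sum_(i < n) w i) * (ln (prop th' j) - ln (prop th j)) +
     (\sum_(i < n) w i * ln (gauss (y i) (mean th' j) (cov th' j)) -
      \sum_(i < n) w i * ln (gauss (y i) (mean th j) (cov th j))).
  rewrite mulr_suml -sumrB -big_split; apply: eq_bigr => i _.
  rewrite (bigD1 j) //= big1 ?addr0; last by move=> l hl; rewrite ol // subrr mulr0.
  have q0 : 0 < prop th' j by have [] := g' j.
  rewrite !ln_fc // /w; ring.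
have P : \sum_(l < J) prop th' l - \sum_(l < J) prop th l = prop th' j - prop th j.
  have E : \sum_(l < J | l != j) prop th' l = \sum_(l < J | l != j) prop th l.
    by apply: eq_bigr => l hl; rewrite op.
  rewrite (bigD1 j) //= [in X in _ - X](bigD1 j) //= E.
  by rewrite opprD addrACA subrr addr0.
have LD := loglik_diff hJ g g'; rewrite X in LD.
rewrite /modloglik.
set s := \sum_(i < n) w i in s0 pj LD gs.
have n0 : 0 < n%:R :> R by rewrite ltr0n.
have hx := ln_le_sub1 (divr_gt0 (mulr_gt0 n0 p0) s0).
rewrite ln_div ?posrE ?mulr_gt0 // lnM ?posrE // in hx.
move: hx; rewrite -subr_ge0 => hx; have hxs := mulr_ge0 (ltW s0) hx.
rewrite pj ln_div ?posrE // in LD P.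
have ex : s * (n%:R * prop th j / s) = n%:R * prop th j by field; rewrite gt_eqF.
have en : n%:R * (s / n%:R) = s by field; rewrite gt_eqF.
have gs' : \sum_(i < n) w i * ln (gauss (y i) (mean th j) (cov th j)) <=
  \sum_(i < n) w i * ln (gauss (y i) (mean th' j) (cov th' j)) := gs.
move: gs' LD P hxs ex en.
set G1 := \sum_(i < n) w i * ln (gauss (y i) (mean th j) (cov th j)).
set G2 := \sum_(i < n) w i * ln (gauss (y i) (mean th' j) (cov th' j)).
set Sp' := \sum_(l < J) prop th' l.
set Sp := \sum_(l < J) prop th l.
rewrite -/th'.
set Lp := loglik y th'. set L0 := loglik y th. set D := Dkl y th' th.
move=> gs' LD P hxs ex en.
nra.
Qed.


Lemma good_step th j : (0 < n)%N -> good th ->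
  (forall l, spd (cov (cemm_step y th j) l)) -> good (cemm_step y th j).
Proof.
move=> hn g hs l; split => //.
rewrite /cemm_step /=; case: eqP => _; last by have [] := g l.
rewrite divr_gt0 ?ltr0n //; apply: sum_gt0 => // i; exact: tpost_gt0.
Qed.

End Main.

Unset Implicit Arguments.
Theorem proposition2 (R : realType) (d J n : nat)
  (hd : (0 < d)%N) (hJ : (0 < J)%N) (hn : (0 < n)%N)
  (y : 'I_n -> 'cV[R]_d) (th : nat -> param R d J) :
  in_Theta (th 0%N) ->
  (* the CEMM recursion, component j = k mod J (0-based) updated at step k *)
  (forall (k : nat) (j : 'I_J), nat_of_ord j = (k %% J)%N ->
     th k.+1 = cemm_step y (th k) j) ->
  (* the algorithm is well defined: all covariance iterates are SPD *)
  (forall (k : nat) (j : 'I_J), spd (cov (th k) j)) ->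
  (forall k : nat, modloglik y (th k) <= modloglik y (th k.+1)) /\
  (forall k : nat,
     Dkl y (th k.+1) (th k) <= modloglik y (th k.+1) - modloglik y (th k)).
Proof.
move=> h0 hstep hspd.
have hst : forall k, th k.+1 = cemm_step y (th k) (Ordinal (ltn_pmod k hJ)).
  by move=> k; apply: hstep.
have gk : forall k, good (th k).
  elim=> [|k IH]; first by move=> l; have [] := h0 l; move=> /andP [] ? _ ?; split.
  rewrite hst; apply: good_step => //; rewrite -hst; exact: hspd.
have main : forall k,
    Dkl y (th k.+1) (th k) <= modloglik y (th k.+1) - modloglik y (th k).
  by move=> k; rewrite hst; apply: step_main => //; rewrite -hst.
split => // k; rewrite -subr_ge0; apply: le_trans (main k).
by apply: Dkl_ge0.
Qed.
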